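(* Let $T$ be the rational map of the plane $$T(x,y)=\bigg(\frac{(1+y)(1+x-xy)^2}{(1+x)(-1-y+xy)(1+x-y^2)},\ \frac{(x-y)^2(1+x+y)}{(1+y-x^2)(1+x-y^2)}\bigg),$$ let $I(x,y)=\dfrac{(x+1)(y+1)(x+y+1)}{xy}$ and $\omega=\dfrac{1}{xy}\,dx\wedge dy$. Then, as identities of rational functions/forms (valid wherever everything is defined): (i) $I\circ T^2=I$; hence $T^2$ maps each level curve $E_r=\{I=r\}$ into itself, and these level curves form a pencil of cubic curves $(x+1)(y+1)(x+y+1)-rxy=0$; (ii) $(T^2)^*\omega=-4\,\omega$, i.e. if $J$ is the Jacobian determinant of $T^2$ at $(x,y)$ and $(\bar x,\bar y)=T^2(x,y)$, then $J(x,y)/(\bar x\bar y)=-4/(xy)$.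
   Context: Geometric meaning: every projective equivalence class of (generic) pentagons in $\mathbb{RP}^2$ has a unique representative with vertices $V_1=[0:-1:1], V_2=[1:0:0], V_3=[0:1:0], V_4=[-1:0:1], V_5=[x:y:1]$; call it $P(x,y)$, so $(x,y)$ are coordinates on the moduli space $M_5$ of projective classes of pentagons. For a polygon with vertices $V_j$ (indices mod 5), the projective normal of the edge $V_jV_{j+1}$ is the line through the point $(V_{j-1}V_{j+1})\cap(V_jV_{j+2})$ (intersection of the diagonals) and the point $(V_{j-1}V_j)\cap(V_{j+1}V_{j+2})$. The map $T$ sends the polygon to the polygon whose vertices are the intersections of consecutive projective normals; in the coordinates $(x,y)$ (after renormalizing to the form $P(\bar x,\bar y)$) it is given by the displayed formula. *)

(* Defs.v *)
From Stdlib Require Import Reals.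
From Coquelicot Require Import Coquelicot.
Open Scope R_scope.

Definition Tx (x y : R) : R :=
  (1 + y) * (1 + x - x * y) ^ 2 / ((1 + x) * (-1 - y + x * y) * (1 + x - y ^ 2)).
Definition Ty (x y : R) : R :=
  (x - y) ^ 2 * (1 + x + y) / ((1 + y - x ^ 2) * (1 + x - y ^ 2)).

Definition T (p : R * R) : R * R := (Tx (fst p) (snd p), Ty (fst p) (snd p)).

Definition T_defined (p : R * R) : Prop :=
  let x := fst p in let y := snd p in
  1 + x <> 0 /\ -1 - y + x * y <> 0 /\ 1 + x - y ^ 2 <> 0 /\ 1 + y - x ^ 2 <> 0.

Definition T2 (p : R * R) : R * R := T (T p).

Definition I (p : R * R) : R :=
  (fst p + 1) * (snd p + 1) * (fst p + snd p + 1) / (fst p * snd p).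
Definition cubic (r : R) (p : R * R) : R :=
  (fst p + 1) * (snd p + 1) * (fst p + snd p + 1) - r * fst p * snd p.

Definition jac (F : R * R -> R * R) (p : R * R) : R :=
  let x := fst p in let y := snd p in
  Derive (fun t => fst (F (t, y))) x * Derive (fun t => snd (F (x, t))) y
  - Derive (fun t => fst (F (x, t))) y * Derive (fun t => snd (F (t, y))) x.

(* Main.v *)
Require Import Defs.
From Stdlib Require Import Reals Lra.
From Coquelicot Require Import Coquelicot.
Open Scope R_scope.

Definition C (x y : R) := (x+1)*(y+1)*(x+y+1).
Definition D1 (x y : R) := (1 + x) * (-1 - y + x * y) * (1 + x - y ^ 2).
Definition D2 (x y : R) := (1 + y - x ^ 2) * (1 + x - y ^ 2).
Definition j (x y : R) := 2*(1+x-x*y)^2*(x-y)^2/((1+x)*D1 x y*D2 x y).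

Lemma L1 x y : T_defined (x,y) -> C (Tx x y) (Ty x y) = - x*y*j x y/2.
Proof. unfold T_defined, C, j, D1, D2, Tx, Ty; simpl; intros [h1 [h2 [h3 h4]]].
field; rewrite ?Rmult_1_r in *; tauto. Qed.

Lemma L2 x y : T_defined (x,y) -> Tx x y * Ty x y = j x y * C x y / 2.
Proof. unfold T_defined, C, j, D1, D2, Tx, Ty; simpl; intros [h1 [h2 [h3 h4]]].
field; rewrite ?Rmult_1_r in *; tauto. Qed.

Definition TxA x y := (1 + y) * (1 + x - x * y) ^ 2.
Definition TxB x y := (1 + x) * (-1 - y + x * y) * (1 + x - y ^ 2).
Definition TxAx x y := (1+y)*2*(1+x-x*y)*(1-y).
Definition TxAy x y := (1+x-x*y)^2 + (1+y)*2*(1+x-x*y)*(-x).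
Definition TxBx x y := (-1-y+x*y)*(1+x-y^2) + (1+x)*y*(1+x-y^2) + (1+x)*(-1-y+x*y).
Definition TxBy x y := (1+x)*(-1+x)*(1+x-y^2) + (1+x)*(-1-y+x*y)*(-2*y).
Definition TxX x y := (TxAx x y * TxB x y - TxA x y * TxBx x y)/(TxB x y)^2.
Definition TxY x y := (TxAy x y * TxB x y - TxA x y * TxBy x y)/(TxB x y)^2.
Definition TyP x y := (x - y) ^ 2 * (1 + x + y).
Definition TyQ x y := (1 + y - x ^ 2) * (1 + x - y ^ 2).
Definition TyPx x y := 2*(x-y)*(1+x+y) + (x-y)^2.
Definition TyPy x y := -2*(x-y)*(1+x+y) + (x-y)^2.
Definition TyQx x y := -2*x*(1+x-y^2) + (1+y-x^2).
Definition TyQy x y := (1+x-y^2) + (1+y-x^2)*(-2*y).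
Definition TyX x y := (TyPx x y * TyQ x y - TyP x y * TyQx x y)/(TyQ x y)^2.
Definition TyY x y := (TyPy x y * TyQ x y - TyP x y * TyQy x y)/(TyQ x y)^2.

Ltac nz := repeat match goal with H : _ /\ _ |- _ => destruct H end; rewrite ?Rmult_1_r in *; repeat split; 
  repeat apply Rmult_integral_contrapositive_currified;
  try (match goal with |- ?a <> 0 => match goal with H : ?b <> 0 |- _ =>
    let e := fresh in intro e; apply H; rewrite <- e; ring end end).

Lemma dTx (a b : R -> R) x a' b' : is_derive a x a' -> is_derive b x b' ->
  T_defined (a x, b x) ->
  is_derive (fun t => Tx (a t) (b t)) x (TxX (a x) (b x) * a' + TxY (a x) (b x) * b').
Proof.
intros ha hb hd. unfold T_defined in hd; simpl in hd. unfold Tx.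
auto_derive.
- assert (ex_derive a x) by (exists a'; exact ha).
  assert (ex_derive b x) by (exists b'; exact hb).
  rewrite ?Rmult_1_r in hd. repeat split; auto; try tauto.
  nz.
- replace (Derive (fun t => a t) x) with a' by (symmetry; apply is_derive_unique; exact ha).
  replace (Derive (fun t => b t) x) with b' by (symmetry; apply is_derive_unique; exact hb).
  unfold TxX, TxY, TxA, TxB, TxAx, TxAy, TxBx, TxBy.
  set (p := a x) in *; set (q := b x) in *.
  rewrite ?Rmult_1_r in hd.
  field. nz.
Qed.

Lemma dTy (a b : R -> R) x a' b' : is_derive a x a' -> is_derive b x b' ->
  T_defined (a x, b x) ->
  is_derive (fun t => Ty (a t) (b t)) x (TyX (a x) (b x) * a' + TyY (a x) (b x) * b').
Proof.
intros ha hb hd. unfold T_defined in hd; simpl in hd. unfold Ty.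
auto_derive.
- assert (ex_derive a x) by (exists a'; exact ha).
  assert (ex_derive b x) by (exists b'; exact hb).
  rewrite ?Rmult_1_r in hd. repeat split; auto; try tauto.
  nz.
- replace (Derive (fun t => a t) x) with a' by (symmetry; apply is_derive_unique; exact ha).
  replace (Derive (fun t => b t) x) with b' by (symmetry; apply is_derive_unique; exact hb).
  unfold TyX, TyY, TyP, TyQ, TyPx, TyPy, TyQx, TyQy.
  set (p := a x) in *; set (q := b x) in *.
  rewrite ?Rmult_1_r in hd.
  field. nz.
Qed.

Lemma Ldet x y : T_defined (x,y) -> TxX x y * TyY x y - TxY x y * TyX x y = j x y.
Proof. intro hd. unfold T_defined in hd; simpl in hd.
unfold TxX, TxY, TyX, TyY, TxA, TxB, TxAx, TxAy, TxBx, TxBy, TyP, TyQ, TyPx, TyPy, TyQx, TyQy, j, D1, D2.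
field. nz. Qed.

Lemma frac_eq a b c d : c <> 0 -> d <> 0 -> a * d = b * c -> a / c = b / d.
Proof. intros hc hd h. replace (a/c) with (a*d/(c*d)) by (field; auto).
rewrite h. field; auto. Qed.

Theorem theorem1 (x y : R) :
  x <> 0 -> y <> 0 ->
  T_defined (x, y) -> T_defined (T (x, y)) ->
  fst (T2 (x, y)) <> 0 -> snd (T2 (x, y)) <> 0 ->
  I (T2 (x, y)) = I (x, y) /\
  (forall r : R, cubic r (x, y) = 0 -> cubic r (T2 (x, y)) = 0) /\
  jac T2 (x, y) / (fst (T2 (x, y)) * snd (T2 (x, y))) = -4 / (x * y).
Proof.
intros hx hy hd1 hd2 hX hY.
assert (hux : is_derive (fun t => Tx t y) x (TxX x y)).
{ replace (TxX x y) with (TxX x y * 1 + TxY x y * 0) by ring.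
  apply (dTx (fun t => t) (fun _ => y)); [apply (is_derive_id (K := R_AbsRing)) | auto_derive; auto | exact hd1]. }
assert (huy : is_derive (fun t => Tx x t) y (TxY x y)).
{ replace (TxY x y) with (TxX x y * 0 + TxY x y * 1) by ring.
  apply (dTx (fun _ => x) (fun t => t)); [auto_derive; auto | apply (is_derive_id (K := R_AbsRing)) | exact hd1]. }
assert (hvx : is_derive (fun t => Ty t y) x (TyX x y)).
{ replace (TyX x y) with (TyX x y * 1 + TyY x y * 0) by ring.
  apply (dTy (fun t => t) (fun _ => y)); [apply (is_derive_id (K := R_AbsRing)) | auto_derive; auto | exact hd1]. }
assert (hvy : is_derive (fun t => Ty x t) y (TyY x y)).
{ replace (TyY x y) with (TyX x y * 0 + TyY x y * 1) by ring.
  apply (dTy (fun _ => x) (fun t => t)); [auto_derive; auto | apply (is_derive_id (K := R_AbsRing)) | exact hd1]. }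
set (u := Tx x y) in *. set (v := Ty x y) in *.
assert (d1 : Derive (fun t => fst (T2 (t, y))) x = TxX u v * TxX x y + TxY u v * TyX x y).
{ apply is_derive_unique. exact (dTx (fun t => Tx t y) (fun t => Ty t y) x _ _ hux hvx hd2). }
assert (d2 : Derive (fun t => snd (T2 (x, t))) y = TyX u v * TxY x y + TyY u v * TyY x y).
{ apply is_derive_unique. exact (dTy (fun t => Tx x t) (fun t => Ty x t) y _ _ huy hvy hd2). }
assert (d3 : Derive (fun t => fst (T2 (x, t))) y = TxX u v * TxY x y + TxY u v * TyY x y).
{ apply is_derive_unique. exact (dTx (fun t => Tx x t) (fun t => Ty x t) y _ _ huy hvy hd2). }
assert (d4 : Derive (fun t => snd (T2 (t, y))) x = TyX u v * TxX x y + TyY u v * TyX x y).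
{ apply is_derive_unique. exact (dTy (fun t => Tx t y) (fun t => Ty t y) x _ _ hux hvx hd2). }
assert (eJ : jac T2 (x, y) = j u v * j x y).
{ unfold jac; cbn [fst snd]. rewrite d1, d2, d3, d4.
  rewrite <- (Ldet u v hd2), <- (Ldet x y hd1). ring. }
change (fst (T2 (x, y))) with (Tx u v) in *. change (snd (T2 (x, y))) with (Ty u v) in *.
set (X := Tx u v) in *. set (Y := Ty u v) in *.
assert (A := L1 x y hd1). assert (B := L2 x y hd1).
assert (A' := L1 u v hd2). assert (B' := L2 u v hd2).
fold u v in A, B. fold X Y in A', B'. change (T2 (x, y)) with (X, Y). clearbody u v X Y.
assert (K : C u v * C x y = -(x*y)*(u*v)). { rewrite A, B. field. }
assert (E : C X Y * (x*y) = C x y * (X*Y)).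
{ rewrite A', B'. assert (Z: C x y * (j u v * C u v / 2) = j u v / 2 * (C u v * C x y)). { field. }
  rewrite Z, K. field. }
assert (I1 : I (X, Y) = I (x, y)).
{ unfold I; cbn [fst snd]. apply frac_eq.
  - apply Rmult_integral_contrapositive_currified; auto.
  - apply Rmult_integral_contrapositive_currified; auto.
  - unfold C in E. exact E. }
split; [exact I1 | split].
- intros r hr. unfold cubic in *; cbn [fst snd] in *.
  assert (hc : C x y = r * x * y) by (unfold C; lra).
  assert (hxy : x * y <> 0) by (apply Rmult_integral_contrapositive_currified; auto).
  assert (C X Y = r * X * Y).
  { apply (Rmult_eq_reg_r (x*y)); [| exact hxy]. rewrite E, hc. field. }
  unfold C in H. lra.
- rewrite eJ. apply frac_eq.
  + apply Rmult_integral_contrapositive_currified; auto.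
  + apply Rmult_integral_contrapositive_currified; auto.
  + rewrite B', A. field.
Qed.
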